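(* Let $(t_j^i)_{0\le j\le i}$ be real numbers and let $h_{j,k}^i$ ($0\le k\le i$, $0\le j\le i-k$) be defined by $h_{j,0}^i=t_j^i$ and $h_{j,k}^i=h_{j,k-1}^{i-1}+h_{j,k-1}^{i}+h_{j+1,k-1}^{i}$ for $k\ge 1$. Suppose that there is a constant $c$ with $t_0^i=c$ for all $i\ge 0$, and that Pascal's rule $t^i_{j}=t^{i-1}_{j-1}+t^{i-1}_{j}$ holds for all $i\ge 2$, $1\le j\le i-1$. Fix $j,k\ge 0$ and let $m=j+k+1$. Then the sequence $\{h_{j,k}^{i}\}_{i=j+k}^{\infty}$ satisfies the $m$-th order homogeneous linear recurrence $$\sum_{\ell=0}^{m}(-1)^{\ell}\binom{m}{\ell} h_{j,k}^{i+\ell}=0\qquad\text{for all } i\geq j+k.$$ *)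

(* Defs.v *)
From mathcomp Require Import all_boot all_order all_algebra.
From mathcomp Require Import reals.
Set Implicit Arguments. Unset Strict Implicit. Unset Printing Implicit Defensive.
Import Order.TTheory GRing.Theory Num.Theory.
Local Open Scope ring_scope.

(* t i j stands for t_j^i;  hh t k i j stands for h_{j,k}^i:
   h_{j,0}^i = t_j^i,
   h_{j,k}^i = h_{j,k-1}^{i-1} + h_{j,k-1}^i + h_{j+1,k-1}^i  (k >= 1).
   The function is total; values outside the range 0<=k<=i, 0<=j<=i-k are
   junk but never used for the values in the range (the recursion stays
   within the range there). *)
Fixpoint hh (R : ringType) (t : nat -> nat -> R) (k i j : nat) : R :=
  match k with
  | 0 => t i j
  | k'.+1 => hh t k' i.-1 j + hh t k' i j + hh t k' i j.+1
  end.

(* Main.v *)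
Require Import Defs.
From mathcomp Require Import all_boot all_order all_algebra.
From mathcomp Require Import reals.
Import Order.TTheory GRing.Theory Num.Theory.
Set Implicit Arguments. Unset Strict Implicit.
Local Open Scope ring_scope.

Definition DD (R : ringType) (n : nat) (f : nat -> R) (i : nat) : R :=
  \sum_(l < n.+1) (-1) ^+ l * ('C(n, l))%:R * f (i + l)%N.

Lemma DD_S (R : ringType) n (f : nat -> R) i :
  DD n.+1 f i = DD n f i - DD n f i.+1.
Proof.
rewrite /DD big_ord_recl /=.
under eq_bigr => l _ do rewrite /bump /= binS natrD mulrDr mulrDl exprS mulN1r.
rewrite big_split /= addrA; congr (_ + _).
  rewrite [in LHS]big_ord_recr /= (bin_small (ltnSn n)) mulr0n mulr0 mul0r addr0.
  rewrite [in RHS]big_ord_recl /= !bin0 !addn0; congr (_ + _).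
  by apply: eq_bigr => l _; rewrite /bump /= exprS mulN1r !mulNr add1n addnS.
rewrite -sumrN; apply: eq_bigr => l _.
by rewrite addnS addSn !mulNr.
Qed.

Lemma DD_add (R : ringType) n (f g : nat -> R) i :
  DD n (fun x => f x + g x) i = DD n f i + DD n g i.
Proof. by rewrite /DD -big_split; apply: eq_bigr => l _; rewrite mulrDr. Qed.

Lemma DD_ext (R : ringType) n (f g : nat -> R) i :
  (forall x, (i <= x)%N -> f x = g x) -> DD n f i = DD n g i.
Proof. by move=> H; apply: eq_bigr => l _; rewrite H // leq_addr. Qed.

Lemma DD_pred (R : ringType) n (f : nat -> R) i : (1 <= i)%N ->
  DD n (fun x => f x.-1) i = DD n f i.-1.
Proof. by move=> Hi; apply: eq_bigr => l _; case: i Hi. Qed.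

Lemma DD_mono (R : ringType) (f : nat -> R) N b :
  (forall i, (b <= i)%N -> DD N f i = 0) ->
  forall n i, (N <= n)%N -> (b <= i)%N -> DD n f i = 0.
Proof.
move=> H n; elim: n => [|n IH] i Hn Hi.
  by rewrite leqn0 in Hn; move/eqP: Hn => <-; apply: H.
move: Hn; rewrite leq_eqVlt => /orP [/eqP <-|Hlt]; first by apply: H.
by rewrite DD_S !IH // ?subrr // ltnW.
Qed.

Lemma DD_Sdiff (R : ringType) n (f : nat -> R) i :
  DD n.+1 f i = - DD n (fun x => f x.+1 - f x) i.
Proof.
rewrite DD_S DD_add opprD.
have -> : DD n (fun x => - f x) i = - DD n f i.
  by rewrite /DD -sumrN; apply: eq_bigr => l _; rewrite mulrN.
rewrite opprK addrC.
congr (- _ + _).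
Qed.

Section S.
Variables (R : realType) (t : nat -> nat -> R) (c : R).
Hypothesis hc : forall i : nat, t i 0%N = c.
Hypothesis hpascal : forall i j : nat, (2 <= i)%N -> (1 <= j)%N -> (j <= i - 1)%N ->
     t i j = t i.-1 j.-1 + t i.-1 j.

Lemma t_poly j : forall i, (j <= i)%N -> DD j.+1 (fun x => t x j) i = 0.
Proof.
elim: j => [|j IH] i Hi.
  by rewrite /DD !big_ord_recl big_ord0 /= !hc bin1 expr1 /=; rewrite mulN1r mulr1 addr0 mul1r mulNr mul1r subrr.
rewrite DD_Sdiff.
have -> : DD j.+1 (fun x => t x.+1 j.+1 - t x j.+1) i = DD j.+1 (fun x => t x j) i.
  apply: DD_ext => x Hx; rewrite (hpascal (i:=x.+1) (j:=j.+1)) //=.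
  - by rewrite addrK.
  - exact: leq_ltn_trans (leq0n j) (leq_trans Hi Hx).
  - by rewrite subSS subn0 (leq_trans Hi Hx).
by rewrite IH ?oppr0 // ltnW.
Qed.

Lemma h_poly k : forall j i, (j + k <= i)%N -> DD (j + k).+1 (fun x => hh t k x j) i = 0.
Proof.
elim: k => [|k IH] j i Hi.
  by rewrite addn0 t_poly // -(addn0 j).
rewrite /=.
rewrite !DD_add.
have Hi1 : (1 <= i)%N by apply: leq_trans Hi; rewrite addnS.
rewrite (@DD_pred _ _ (fun x => hh t k x j)) //.
rewrite (DD_mono (IH j) (n := (j + k.+1).+1) (i := i.-1)); last first.
- by rewrite -ltnS prednK // -addnS.
- by rewrite addnS ltnW.
rewrite (DD_mono (IH j) (n := (j + k.+1).+1) (i := i)); last first.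
- by apply: leq_trans Hi; rewrite addnS ltnW.
- by rewrite addnS ltnW.
by rewrite addnS -addSn IH ?addSn -?addnS // !add0r.
Qed.
End S.

Theorem theorem6 (R : realType) (t : nat -> nat -> R) (c : R)
  (hc : forall i : nat, t i 0%N = c)
  (hpascal : forall i j : nat, (2 <= i)%N -> (1 <= j)%N -> (j <= i - 1)%N ->
     t i j = t i.-1 j.-1 + t i.-1 j)
  (j k : nat) :
  let m := (j + k).+1 in
  forall i : nat, (j + k <= i)%N ->
    \sum_(l < m.+1) (-1) ^+ l * ('C(m, l))%:R * hh t k (i + l)%N j = 0.
Proof.
move=> m i Hi.
have := DD_mono (h_poly hc hpascal (k:=k) (j:=j)) (n := m) (i := i) (leqnn _) Hi.
by rewrite /DD.
Qed.
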